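(* Let $\alpha\in (0,1)$ be a real number and let $a_1,a_2,\ldots,a_n\in [0,\alpha]$ be reals with $\sum_{\ell=1}^n a_\ell=1$. Then the numbers $a_1,\ldots,a_n$ can be partitioned into $2\lceil 1/\alpha\rceil-1$ (possibly empty) groups such that the sum of the numbers in each group is at most $\alpha$. *)

(* Defs.v *)
From mathcomp Require Import all_boot all_order all_algebra.
Set Implicit Arguments. Unset Strict Implicit. Unset Printing Implicit Defensive.

(* Main.v *)
Require Import Defs.
From mathcomp Require Import all_boot all_order all_algebra.
From mathcomp Require Import zify ring lra.
Import Order.TTheory GRing.Theory Num.Theory.
Local Open Scope ring_scope.

Lemma grow_set (T : finType) (B S : {set T}) (Inv : {set T} -> Prop) :
  B \subset S -> Inv B ->
  (forall (P : {set T}) x, B \subset P -> P \subset S -> x \in S -> x \notin P -> Inv P -> Inv (x |: P)) ->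
  Inv S.
Proof.
move=> BS IB step.
suff H : forall m (P : {set T}), B \subset P -> P \subset S -> #|S :\: P| = m -> Inv P -> Inv S.
  exact: (H _ B (subxx B) BS erefl IB).
elim=> [|m IH] P BP PS hc IP.
  have : S \subset P by rewrite -setD_eq0 -cards_eq0 hc.
  by move=> SP; have -> : S = P by apply/eqP; rewrite eqEsubset SP PS.
have : (0 < #|S :\: P|)%N by rewrite hc.
case/card_gt0P=> x; rewrite inE => /andP [xP xS].
apply: (IH (x |: P)).
- by apply: subset_trans BP (subsetUr _ _).
- by rewrite subUset sub1set xS PS.
- have -> : S :\: (x |: P) = (S :\: P) :\ x.
    by apply/setP=> y; rewrite !inE; case: (y == x).
  by move: hc; rewrite (cardsD1 x (S :\: P)) !inE xP xS /= add1n => -[].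
- exact: step.
Qed.

Lemma upd (R : pzRingType) n k (F : 'I_n -> R) (P : {set 'I_n}) x
  (g : 'I_n -> 'I_k) j0 j : x \notin P ->
  \sum_(l | (l \in x |: P) && ((if l == x then j0 else g l) == j)) F l
  = (if j0 == j then F x else 0) + \sum_(l | (l \in P) && (g l == j)) F l.
Proof.
move=> xP.
rewrite !big_mkcondr /=.
rewrite big_setU1 //= eqxx; congr (_ + _).
apply: eq_bigr => l lP; case: (l =P x) => // ex; by rewrite -ex lP in xP.
Qed.

Lemma sub_le (n : nat) (R : numDomainType) (a : 'I_n -> R) (A : {set 'I_n}) :
  (forall l, 0 <= a l) -> \sum_(l in A) a l <= \sum_l a l.
Proof.
move=> h; rewrite [X in _ <= X](bigID (fun l => l \in A)) /= lerDl.
by apply: sumr_ge0.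
Qed.

Theorem lemma6p2 (R : archiRealFieldType) (alpha : R) (n k : nat) (a : 'I_n -> R) :
  0 < alpha -> alpha < 1 ->
  (forall l, 0 <= a l <= alpha) ->
  \sum_(l < n) a l = 1 ->
  (k%:Z = 2 * Num.ceil (alpha^-1) - 1)%R ->
  exists g : 'I_n -> 'I_k,
    forall j : 'I_k, \sum_(l < n | g l == j) a l <= alpha.
Proof.
move=> a0 a1 ha hsum hk.
set c := Num.ceil alpha^-1 in hk.
have hc : alpha^-1 <= c%:~R := ceil_ge _.
have hac : 1 <= alpha * c%:~R.
  by have := ler_wpM2l (ltW a0) hc; rewrite mulfV // gt_eqF.
have c0 : 0 < c.
  rewrite -(ltr0z R); apply: lt_le_trans hc; by rewrite invr_gt0.
have hKR : k%:R + 1 = 2 * (c%:~R : R).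
  have : (k%:Z)%:~R = (2 * c - 1)%:~R :> R by rewrite hk.
  rewrite intrD intrM /=.
  rewrite ?intrN -!pmulrn => ->; rewrite addrNK //.
have k1 : (0 < k)%N by lia.
move: (c%:~R : R) hac hKR => C hac hKR.
clear hk hc c0.
case: k k1 hKR => // k' _ hKR.
have cnt : forall Q : pred 'I_n, \sum_(l | Q l) (1:R) = (#|Q|)%:R.
  by move=> Q; rewrite -sumr_const.
have hK1 : 1 <= (k'.+1)%:R :> R by rewrite ler1n.
set big := [set l | alpha / 2 < a l].
have P1 : exists g : 'I_n -> 'I_k'.+1,
    forall j, \sum_(l | (l \in big) && (g l == j)) (1:R) <= 1.
  apply: (@grow_set _ set0 big (fun P => exists g : 'I_n -> 'I_k'.+1,
    forall j, \sum_(l | (l \in P) && (g l == j)) (1:R) <= 1)).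
  - exact: sub0set.
  - exists (fun _ => ord0) => j; rewrite big_pred0 // => l; by rewrite inE.
  move=> P x _ PS xS xP [g hg].
  case: (boolP [exists j, \sum_(l | (l \in P) && (g l == j)) (1:R) == 0]).
    case/existsP=> j /eqP hj; exists (fun l => if l == x then j else g l) => j'.
    rewrite upd //; case: (j =P j') => [<-|_]; first by rewrite hj addr0.
    by rewrite add0r.
  move=> hne; exfalso.
  have hge : forall j, 1 <= \sum_(l | (l \in P) && (g l == j)) (1:R).
    move=> j; move/existsPn: hne => /(_ j).
    by rewrite cnt pnatr_eq0 ler1n lt0n.
  have hs1 : (k'.+1)%:R <= \sum_(l in P) (1:R).
    rewrite (partition_big g predT) //=.
    have -> : (k'.+1)%:R = \sum_(j < k'.+1) (1:R) by rewrite sumr_const card_ord.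
    by apply: ler_sum => j _; apply: hge.
  have hs2 : alpha / 2 * \sum_(l in P) (1:R) <= \sum_(l in P) a l.
    rewrite mulr_sumr; apply: ler_sum => l lP; rewrite mulr1.
    by have := subsetP PS l lP; rewrite inE => /ltW.
  have hx : alpha / 2 < a x by move: xS; rewrite inE.
  have hs3 : a x + \sum_(l in P) a l <= 1.
    rewrite -big_setU1 //= -hsum; apply: sub_le => l; by case/andP: (ha l).
  have h4 : alpha / 2 * (k'.+1)%:R <= alpha / 2 * \sum_(l in P) (1:R).
    by rewrite ler_wpM2l // divr_ge0 // ltW.
  nra.
have P2 : exists g : 'I_n -> 'I_k'.+1,
    forall j, \sum_(l | (l \in [set: 'I_n]) && (g l == j)) a l <= alpha.
  apply: (@grow_set _ big [set: 'I_n] (fun P => exists g : 'I_n -> 'I_k'.+1,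
    forall j, \sum_(l | (l \in P) && (g l == j)) a l <= alpha)).
  - exact: subsetT.
  - case: P1 => g hg; exists g => j.
    apply: (@le_trans _ _ (\sum_(l | (l \in big) && (g l == j)) alpha * 1)).
      by apply: ler_sum => l _; rewrite mulr1; case/andP: (ha l).
    rewrite -mulr_sumr -[X in _ <= X]mulr1.
    by apply: ler_wpM2l; [apply: ltW | apply: hg].
  move=> P x bP _ _ xP [g hg].
  have xs : a x <= alpha / 2.
    case: (boolP (x \in big)) => [xb|]; first by rewrite (subsetP bP x xb) in xP.
    by rewrite inE -leNgt.
  case: (boolP [exists j, \sum_(l | (l \in P) && (g l == j)) a l + a x <= alpha]).
    case/existsP=> j hj; exists (fun l => if l == x then j else g l) => j'.
    rewrite upd //; case: (j =P j') => [<-|_]; first by rewrite addrC.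
    by rewrite add0r.
  move=> hne; exfalso.
  have hlt : forall j, alpha - a x < \sum_(l | (l \in P) && (g l == j)) a l.
    move=> j; move/existsPn: hne => /(_ j).
    by rewrite -ltNge ltrBlDr.
  have hs1 : (k'.+1)%:R * (alpha - a x) < \sum_(l in P) a l.
    rewrite (partition_big g predT) //=.
    have -> : (k'.+1)%:R * (alpha - a x) = \sum_(j < k'.+1) (alpha - a x).
      by rewrite sumr_const card_ord mulr_natl.
    apply: ltr_sum => [|j _]; last exact: hlt.
    by apply/hasP; exists ord0; rewrite ?mem_index_enum.
  have hs3 : a x + \sum_(l in P) a l <= 1.
    rewrite -big_setU1 //= -hsum; apply: sub_le => l; by case/andP: (ha l).
  have h5 : 0 <= ((k'.+1)%:R - 1) * (alpha / 2 - a x).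
    by apply: mulr_ge0; rewrite subr_ge0.
  nra.
case: P2 => g hg; exists g => j.
have -> : \sum_(l < n | g l == j) a l = \sum_(l | (l \in [set: 'I_n]) && (g l == j)) a l.
  by apply: eq_bigl => l; rewrite in_setT.
exact: hg.
Qed.
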